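(* Let $(X,d)$ be a complete metric space, $N\geq1$, $\{A_{1},\ldots,A_{N}\}$ a family of nonempty closed subsets of $X$, and $T:X\rightarrow X$. Set $A_{N+1}:=A_{1}$. Suppose: (F1) $T(A_{i})\subseteq A_{i+1}$ for all $i\in\{1,\dots,N\}$; (F3) for every $\varepsilon>0$ there exists $\delta(\varepsilon)>0$ such that for all $i\in\{1,\ldots,N\}$, $x\in A_{i}$, $y\in A_{i+1}$: $\varepsilon\leq d(x,y)<\varepsilon+\delta(\varepsilon)$ implies $d(Tx,Ty)<\varepsilon$. Then $\bigcap_{i=1}^{N}A_{i}$ is nonempty and $T$ has a fixed point $x^{\ast}\in\bigcap_{i=1}^{N}A_{i}$. Moreover, $x^{\ast}$ is the unique fixed point of $T$ in $\bigcup_{i=1}^{N}A_{i}$, and $T^{n}x\rightarrow x^{\ast}$ as $n\rightarrow\infty$ for all $x\in\bigcup_{i=1}^{N}A_{i}$. *)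

(* Defs.v *)
From Stdlib Require Import Reals Lra Lia.
Open Scope R_scope.

Definition is_metric {X : Type} (d : X -> X -> R) : Prop :=
  (forall x y, 0 <= d x y) /\
  (forall x y, d x y = 0 <-> x = y) /\
  (forall x y, d x y = d y x) /\
  (forall x y z, d x z <= d x y + d y z).

Definition cauchy_seq {X : Type} (d : X -> X -> R) (u : nat -> X) : Prop :=
  forall eps, 0 < eps -> exists N, forall m n, (N <= m)%nat -> (N <= n)%nat ->
    d (u m) (u n) < eps.

Definition seq_converges_to {X : Type} (d : X -> X -> R) (u : nat -> X) (l : X) : Prop :=
  forall eps, 0 < eps -> exists N, forall n, (N <= n)%nat -> d (u n) l < eps.

Definition complete_metric {X : Type} (d : X -> X -> R) : Prop :=
  forall u : nat -> X, cauchy_seq d u -> exists l, seq_converges_to d u l.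

Definition metric_open {X : Type} (d : X -> X -> R) (U : X -> Prop) : Prop :=
  forall x, U x -> exists r, 0 < r /\ forall y, d x y < r -> U y.

Definition metric_closed {X : Type} (d : X -> X -> R) (F : X -> Prop) : Prop :=
  metric_open d (fun x => ~ F x).

Fixpoint iter_map {X : Type} (T : X -> X) (n : nat) (x : X) : X :=
  match n with O => x | S k => T (iter_map T k x) end.

(* Main.v *)
Require Import Defs.
From Stdlib Require Import Reals Lra Lia Arith Classical.
Open Scope R_scope.

Lemma G_lemma (e : nat -> R) :
  (forall n, 0 <= e n) -> (forall n, e (S n) <= e n) ->
  (forall eps, 0 < eps -> exists delta, 0 < delta /\
     forall n, eps <= e n -> e n < eps + delta -> e (S n) < eps) ->
  forall eps, 0 < eps -> exists M, forall n, (M <= n)%nat -> e n < eps.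
Proof.
  intros H0 Hdec H3.
  assert (Hmono: forall n k, e (n+k)%nat <= e n).
  { intros n k; induction k.
    - rewrite Nat.add_0_r; lra.
    - rewrite Nat.add_succ_r; specialize (Hdec (n+k)%nat); lra. }
  set (E := fun x => exists n, x = - e n).
  assert (HbE: bound E).
  { exists 0; intros x [n ->]; specialize (H0 n); lra. }
  assert (HexE: exists x, E x) by (exists (- e 0%nat); exists 0%nat; reflexivity).
  destruct (completeness E HbE HexE) as [m [Hub Hlub]].
  assert (Hub': forall n, - e n <= m) by (intro n; apply Hub; exists n; reflexivity).
  assert (Hm0: m <= 0).
  { apply Hlub; intros x [n ->]; specialize (H0 n); lra. }
  assert (Hm: m = 0).
  { destruct (Rle_lt_dec 0 m) as [Hle|Hlt]; [lra|].
    destruct (H3 (-m)) as [dl [Hdl Hdn]]; [lra|].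
    assert (Hex: exists n, e n < -m + dl).
    { apply NNPP; intro Hn.
      assert (m <= -(-m+dl)).
      { apply Hlub; intros x [n ->].
        assert (~ e n < -m+dl) by (intro; apply Hn; eauto). lra. }
      lra. }
    destruct Hex as [n Hn].
    pose proof (Hub' n). pose proof (Hub' (S n)).
    assert (e (S n) < -m) by (apply Hdn; lra). lra. }
  intros eps Heps.
  assert (Hex: exists n, e n < eps).
  { apply NNPP; intro Hn.
    assert (m <= - eps).
    { apply Hlub; intros x [n ->].
      assert (~ e n < eps) by (intro; apply Hn; eauto). lra. }
    lra. }
  destruct Hex as [M HM]; exists M; intros n Hn.
  replace n with (M + (n-M))%nat by lia; specialize (Hmono M (n-M)%nat); lra.
Qed.

Section S.
Context {X : Type} (d : X -> X -> R) (B : nat -> X -> Prop) (T : X -> X).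

Lemma iter_S_r n x : iter_map T n (T x) = iter_map T (S n) x.
Proof. induction n; simpl; [reflexivity| rewrite IHn; reflexivity]. Qed.

Lemma iter_add a b x : iter_map T a (iter_map T b x) = iter_map T (a+b) x.
Proof. induction a; simpl; auto; rewrite IHa; auto. Qed.

Lemma iter_B (HB1 : forall i x, B i x -> B (S i) (T x)) i x n :
  B i x -> B (i+n) (iter_map T n x).
Proof.
  intro H; induction n; simpl; [rewrite Nat.add_0_r; auto| rewrite Nat.add_succ_r; apply HB1; auto].
Qed.

Lemma Ble (Hd : is_metric d)
  (HB3 : forall eps, 0 < eps -> exists delta, 0 < delta /\ forall i x y,
     B i x -> B (S i) y -> eps <= d x y -> d x y < eps + delta -> d (T x) (T y) < eps)
  i x y : B i x -> B (S i) y -> d (T x) (T y) <= d x y.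
Proof.
  intros Hx Hy. destruct Hd as [Hpos [Hsep [Hsym Htri]]].
  destruct (Req_dec (d x y) 0) as [H0|H0].
  - apply Hsep in H0; subst y.
    assert (d (T x) (T x) = 0) by (apply Hsep; reflexivity).
    specialize (Hpos x x); lra.
  - assert (Hp: 0 < d x y) by (specialize (Hpos x y); lra).
    destruct (HB3 (d x y) Hp) as [dl [Hdl Hdl']].
    specialize (Hdl' i x y Hx Hy (Rle_refl _) ltac:(lra)). lra.
Qed.

Lemma pair_mono (Hd : is_metric d)
  (HB1 : forall i x, B i x -> B (S i) (T x))
  (HB3 : forall eps, 0 < eps -> exists delta, 0 < delta /\ forall i x y,
     B i x -> B (S i) y -> eps <= d x y -> d x y < eps + delta -> d (T x) (T y) < eps)
  i x y : B i x -> B (S i) y -> forall n, d (iter_map T n x) (iter_map T n y) <= d x y.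
Proof.
  intros Hx Hy n; induction n; simpl.
  - apply Rle_refl.
  - eapply Rle_trans; [apply (Ble Hd HB3 (i+n)%nat) | exact IHn].
    + apply iter_B; auto.
    + apply (iter_B HB1 (S i)); auto.
Qed.

Lemma cauchy_orbit (Hd : is_metric d)
  (HB1 : forall i x, B i x -> B (S i) (T x))
  (HB3 : forall eps, 0 < eps -> exists delta, 0 < delta /\ forall i x y,
     B i x -> B (S i) y -> eps <= d x y -> d x y < eps + delta -> d (T x) (T y) < eps)
  (N : nat) (HN : (1 <= N)%nat) (Bsh : forall i x, B (i+N) x -> B i x)
  i0 x0 : B i0 x0 -> cauchy_seq d (fun n => iter_map T n x0).
Proof.
  intros Hx0. pose proof Hd as [Hpos [Hsep [Hsym Htri]]].
  destruct N as [|N']; [lia|].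
  set (u := fun n => iter_map T n x0).
  assert (HuB: forall n, B (i0+n) (u n)) by (intro; apply iter_B; auto).
  set (D := fun n => d (u n) (u (S n))).
  assert (HDpos: forall n, 0 <= D n) by (intro; apply Hpos).
  assert (HDdec: forall n, D (S n) <= D n).
  { intro n. unfold D, u. simpl. apply (Ble Hd HB3 (i0+n)%nat).
    - apply HuB.
    - apply HB1, HuB. }
  assert (HD0: forall eps, 0 < eps -> exists M, forall n, (M<=n)%nat -> D n < eps).
  { apply G_lemma; auto.
    intros eps Heps; destruct (HB3 eps Heps) as [dl [Hdl H]]; exists dl; split; auto.
    intros n H1 H2. unfold D, u in *. simpl in *. apply (H (i0+n)%nat); auto; first [apply HB1, HuB | apply HuB]. }
  assert (HDmono: forall n k, D (n+k)%nat <= D n).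
  { intros n k; induction k.
    - rewrite Nat.add_0_r; lra.
    - rewrite Nat.add_succ_r; specialize (HDdec (n+k)%nat); lra. }
  assert (Hdist: forall m k, d (u m) (u (m+k)%nat) <= INR k * D m).
  { intros m k; induction k.
    - rewrite Nat.add_0_r. rewrite (proj2 (Hsep _ _) eq_refl). simpl; lra.
    - pose proof (Htri (u m) (u (m+k)%nat) (u (m + S k)%nat)).
      rewrite Nat.add_succ_r in *. rewrite S_INR.
      specialize (HDmono m k). fold (D (m+k)%nat) in H. lra. }
  intros eps' Heps'. set (eps := eps'/4).
  assert (Heps: 0 < eps) by (unfold eps; lra).
  destruct (HB3 eps Heps) as [dl0 [Hdl0 H3]].
  set (dl := Rmin dl0 eps).
  assert (Hdl: 0 < dl) by (apply Rmin_glb_lt; lra).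
  assert (Hdl1: dl <= dl0) by apply Rmin_l.
  assert (Hdl2: dl <= eps) by apply Rmin_r.
  assert (HNp: 1 <= INR (S N')) by (rewrite S_INR; pose proof (pos_INR N'); lra).
  destruct (HD0 (dl / (2*INR (S N')))) as [m Hm].
  { apply Rdiv_lt_0_compat; lra. }
  assert (HNDm: INR (S N') * D m < dl/2).
  { specialize (Hm m (le_n m)).
    replace (dl/2) with (INR (S N') * (dl / (2*INR (S N')))) by (field; lra).
    apply Rmult_lt_compat_l; lra. }
  assert (HDm: D m < dl/2) by (specialize (HDpos m); nra).
  assert (Hinv: forall y, B (S (i0+m)%nat) y -> d (u m) y < eps + dl/2 ->
     B (S (i0+m)%nat) (iter_map T (S N') y) /\ d (u m) (iter_map T (S N') y) < eps + dl/2).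
  { intros y Hy Hdy. split.
    - apply Bsh. apply iter_B; auto.
    - assert (H1: d (u (S m)) (T y) < eps).
      { change (d (T (u m)) (T y) < eps).
        destruct (Rle_lt_dec eps (d (u m) y)).
        - apply (H3 (i0+m)%nat); auto; lra.
        - pose proof (Ble Hd HB3 (i0+m)%nat (u m) y (HuB m) Hy). lra. }
      assert (Hum: B (S (i0+m)%nat) (u (S m))) by (rewrite <- Nat.add_succ_r; apply HuB).
      pose proof (pair_mono Hd HB1 HB3 _ _ _ Hum (HB1 _ _ Hy) N') as H2.
      rewrite iter_S_r in H2. unfold u in H2 at 1. rewrite iter_add in H2.
      replace (N' + S m)%nat with (m + S N')%nat in H2 by lia.
      pose proof (Htri (u m) (u (m + S N')%nat) (iter_map T (S N') y)).
      pose proof (Hdist m (S N')). unfold u in *. lra. }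
  assert (Horb: forall k, B (S (i0+m)%nat) (u (S m + k * S N')%nat) /\
                         d (u m) (u (S m + k * S N')%nat) < eps + dl/2).
  { induction k.
    - rewrite Nat.mul_0_l, Nat.add_0_r. split.
      + rewrite <- Nat.add_succ_r; apply HuB.
      + fold (D m). lra.
    - destruct IHk as [Hb Hd'].
      destruct (Hinv _ Hb Hd') as [Hb2 Hd2].
      unfold u in *. rewrite iter_add in Hb2, Hd2.
      replace (S m + S k * S N')%nat with (S N' + (S m + k * S N'))%nat by (simpl; lia).
      split; assumption. }
  assert (Hall: forall n, (m <= n)%nat -> d (u m) (u n) < 2*eps).
  { intros n Hn. destruct (Nat.eq_dec n m) as [->|Hne'].
    - rewrite (proj2 (Hsep _ _) eq_refl). lra.
    - set (a := (n - S m)%nat).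
      pose proof (Nat.div_mod a (S N') ltac:(lia)) as Ha.
      pose proof (Nat.mod_upper_bound a (S N') ltac:(lia)) as Hr.
      set (q := (a / S N')%nat) in *. set (r := (a mod S N')%nat) in *.
      assert (Hn': n = (S m + q * S N' + r)%nat).
      { rewrite (Nat.mul_comm q). unfold a in Ha. lia. }
      rewrite Hn'.
      destruct (Horb q) as [_ Hq].
      pose proof (Htri (u m) (u (S m + q * S N')%nat) (u (S m + q * S N' + r)%nat)).
      pose proof (Hdist (S m + q * S N')%nat r).
      assert (INR r <= INR (S N')) by (apply le_INR; lia).
      pose proof (HDmono m (S (q * S N'))) as Hmo.
      replace (m + S (q * S N'))%nat with (S m + q * S N')%nat in Hmo by lia.
      pose proof (HDpos (S m + q * S N')%nat).
      pose proof (pos_INR r).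
      assert (INR r * D (S m + q * S N')%nat <= INR (S N') * D m).
      { apply Rmult_le_compat; lra. }
      lra. }
  exists m. intros p q Hp Hq.
  pose proof (Hall p Hp). pose proof (Hall q Hq).
  pose proof (Htri (u p) (u m) (u q)). rewrite (Hsym (u p) (u m)) in H1.
  change (d (u p) (u q) < eps'). unfold eps in *. lra.
Qed.

End S.

Theorem corollary7 (X : Type) (d : X -> X -> R) (N : nat) (A : nat -> X -> Prop)
  (T : X -> X)
  (Hd : is_metric d) (Hcomp : complete_metric d) (HN : (1 <= N)%nat)
  (Hne : forall i, (i < N)%nat -> exists x, A i x)
  (Hcl : forall i, (i < N)%nat -> metric_closed d (A i))
  (F1 : forall i, (i < N)%nat -> forall x, A i x -> A (S i mod N)%nat (T x))
  (F3 : forall eps, 0 < eps -> exists delta, 0 < delta /\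
          forall i, (i < N)%nat -> forall x y, A i x -> A (S i mod N)%nat y ->
            eps <= d x y -> d x y < eps + delta -> d (T x) (T y) < eps) :
  (exists x, forall i, (i < N)%nat -> A i x) /\
  exists xs,
    (forall i, (i < N)%nat -> A i xs) /\ T xs = xs /\
    (forall z, (exists i, (i < N)%nat /\ A i z) -> T z = z -> z = xs) /\
    (forall x, (exists i, (i < N)%nat /\ A i x) ->
       seq_converges_to d (fun n => iter_map T n x) xs).
Proof.
  pose proof Hd as [Hpos [Hsep [Hsym Htri]]].
  set (B := fun i => A (i mod N)).
  assert (Hmod: forall i, (S (i mod N) mod N = S i mod N)%nat).
  { intro i. replace (S i) with (i + 1)%nat by lia.
    rewrite <- Nat.Div0.add_mod_idemp_l. f_equal; lia. }
  assert (Hlt: forall i, (i mod N < N)%nat) by (intro; apply Nat.mod_upper_bound; lia).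
  assert (HB1: forall i x, B i x -> B (S i) (T x)).
  { intros i x Hx. unfold B in *. rewrite <- Hmod. apply F1; auto. }
  assert (HB3 : forall eps, 0 < eps -> exists delta, 0 < delta /\ forall i x y,
     B i x -> B (S i) y -> eps <= d x y -> d x y < eps + delta -> d (T x) (T y) < eps).
  { intros eps Heps. destruct (F3 eps Heps) as [dl [Hdl H]]. exists dl; split; auto.
    intros i x y Hx Hy. unfold B in *. rewrite <- Hmod in Hy. apply (H (i mod N)); auto. }
  assert (Bsh: forall i x, B (i+N)%nat x -> B i x).
  { intros i x. unfold B. replace (i+N)%nat with (i + 1*N)%nat by lia.
    rewrite Nat.Div0.mod_add. auto. }
  assert (HBA: forall i x, (i < N)%nat -> A i x -> B i x).
  { intros i x Hi H. unfold B. rewrite Nat.mod_small; auto. }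
  destruct (Hne 0%nat ltac:(lia)) as [x0 Hx0].
  assert (HB0: B 0%nat x0) by (apply HBA; auto; lia).
  destruct (Hcomp _ (cauchy_orbit d B T Hd HB1 HB3 N HN Bsh 0%nat x0 HB0)) as [l Hl].
  assert (Hlin: forall j, (j < N)%nat -> A j l).
  { intros j Hj. apply NNPP; intro Hnot.
    destruct (Hcl j Hj l Hnot) as [r [Hr Hball]].
    destruct (Hl r Hr) as [K HK].
    assert (HKn: (K <= j + K*N)%nat) by nia.
    specialize (HK _ HKn). rewrite Hsym in HK.
    apply (Hball _ HK).
    pose proof (iter_B B T HB1 0%nat x0 (j + K*N)%nat HB0) as Hb.
    unfold B in Hb. simpl in Hb. rewrite Nat.Div0.mod_add, Nat.mod_small in Hb; auto. }
  assert (HlB: forall k, B k l) by (intro k; unfold B; apply Hlin; auto).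
  assert (Hfix: T l = l).
  { symmetry. apply Hsep.
    destruct (Rle_lt_dec (d l (T l)) 0) as [Hle|Hgt]; [specialize (Hpos l (T l)); lra|].
    exfalso. destruct (Hl (d l (T l) / 4)) as [K HK]; [lra|].
    pose proof (HK (S K) ltac:(lia)). pose proof (HK K ltac:(lia)).
    pose proof (Ble d B T Hd HB3 K _ _ (iter_B B T HB1 0%nat x0 K HB0) (HlB (S K))).
    simpl in *.
    pose proof (Htri l (T (iter_map T K x0)) (T l)) as Htr.
    rewrite (Hsym l (T (iter_map T K x0))) in Htr. lra. }
  split; [exists l; auto|]. exists l. split; [auto|]. split; [auto|]. split.
  - intros z [i [Hi Hz]] Hzf. apply HBA in Hz; auto.
    apply Hsep.
    destruct (Rle_lt_dec (d z l) 0) as [Hle|Hgt]; [specialize (Hpos z l); lra|].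
    exfalso. destruct (HB3 (d z l) Hgt) as [dl [Hdl H]].
    specialize (H i z l Hz (HlB (S i)) (Rle_refl _) ltac:(lra)).
    rewrite Hzf, Hfix in H. lra.
  - intros x [i [Hi Hx]]. apply HBA in Hx; auto.
    intros eps0 Heps0. apply (G_lemma (fun n => d (iter_map T n x) l)); [| | |exact Heps0].
    + intro; apply Hpos.
    + intro n. simpl. rewrite <- Hfix at 1.
      apply (Ble d B T Hd HB3 (i+n)%nat); auto. apply iter_B; auto.
    + intros eps Heps. destruct (HB3 eps Heps) as [dl [Hdl H]]. exists dl; split; auto.
      intros n H1 H2. simpl. rewrite <- Hfix at 1.
      apply (H (i+n)%nat); auto. apply iter_B; auto.
Qed.
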